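(* For every integer $k \ge 4$ there exist positive constants $c_k$ and $d_k$ such that for every positive integer $n$, \[ c_k\cdot 2^{n/(k-1)} \le f(n,k) \le d_k \cdot 2^{n/\lceil k/2\rceil}. \]
   Context: A family $\mathcal{F}$ of subsets of $[n]=\{1,\ldots,n\}$ is $k$-wise intersecting if every collection of at most $k$ members of $\mathcal{F}$ has a common element; it is maximal $k$-wise intersecting if moreover no subset of $[n]$ outside $\mathcal{F}$ can be added while preserving this property. $f(n,k)$ denotes the smallest possible size of a maximal $k$-wise intersecting family of subsets of $[n]$. *)

(* Defs.v *)
From mathcomp Require Import all_boot.
From Stdlib Require Import Reals.
Set Implicit Arguments. Unset Strict Implicit. Unset Printing Implicit Defensive.

(* Families of subsets of [n], modelled as 'I_n = {0,...,n-1}. *)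

Definition kwise_intersecting (n k : nat) (F : {set {set 'I_n}}) : bool :=
  [forall G : {set {set 'I_n}},
     (G \subset F) && (0 < #|G| <= k) ==>
     [exists x : 'I_n, [forall A in G, x \in A]]].

Definition maximal_kwise_intersecting (n k : nat) (F : {set {set 'I_n}}) : bool :=
  kwise_intersecting k F &&
  [forall B : {set 'I_n}, (B \notin F) ==> ~~ kwise_intersecting k (B |: F)].

(* f_mkwi n k = f(n,k): the smallest size of a maximal k-wise intersecting family of
   subsets of [n] (minimum over all such families; the default value
   #|{set {set 'I_n}}| is irrelevant whenever such a family exists,
   e.g. the star {A | 0 \in A} for n >= 1). *)
Definition f_mkwi (n k : nat) : nat :=
  \big[minn/#|{set {set 'I_n}}|]_(F : {set {set 'I_n}} |
      maximal_kwise_intersecting k F) #|F|.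

(* Main.v *)
Require Import Defs.
From mathcomp Require Import all_boot.
From Stdlib Require Import Reals.
From Stdlib Require Import Lra.
From mathcomp Require Import zify.
Set Implicit Arguments. Unset Strict Implicit. Unset Printing Implicit Defensive.
Local Notation "x ^ y" := (expn x y) : nat_scope.


Lemma kwiseP n k (F : {set {set 'I_n}}) :
  reflect (forall G : {set {set 'I_n}}, G \subset F -> 0 < #|G| <= k ->
              exists x, forall A, A \in G -> x \in A)
          (kwise_intersecting k F).
Proof.
apply: (iffP forallP) => H.
- move=> G sG HG; have := H G; rewrite sG HG /= => /existsP [x /forallP Hx].
  by exists x => A AG; have := Hx A; rewrite AG.
- move=> G; apply/implyP => /andP [sG HG]; have [x Hx] := H G sG HG.
  by apply/existsP; exists x; apply/forallP => A; apply/implyP; apply: Hx.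
Qed.

Lemma not_kwise n k (F : {set {set 'I_n}}) :
  ~~ kwise_intersecting k F ->
  exists G : {set {set 'I_n}}, [/\ G \subset F, 0 < #|G| <= k &
              forall x, exists2 A, A \in G & x \notin A].
Proof.
move/forallPn => [G]; rewrite negb_imply => /andP [/andP [sG HG]].
move/existsPn => Hx; exists G; split => // x.
have /forallPn [A] := Hx x; rewrite negb_imply => /andP [AG xA].
by exists A.
Qed.

Lemma kwise_of n k (F G : {set {set 'I_n}}) :
  G \subset F -> 0 < #|G| <= k ->
  (forall x, exists2 A, A \in G & x \notin A) -> ~~ kwise_intersecting k F.
Proof.
move=> sG HG Hx; apply/negP => /kwiseP /(_ G sG HG) [x Hc].
by have [A AG /negP] := Hx x; apply; apply: Hc.
Qed.

Lemma up_closed n k (F : {set {set 'I_n}}) (A A' : {set 'I_n}) :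
  maximal_kwise_intersecting k F -> A \in F -> A \subset A' -> A' \in F.
Proof.
case/andP => kF mF AF sAA'; apply/negPn/negP => nA'.
have := forallP mF A'; rewrite nA' /= => /not_kwise [G [sG /andP [G0 Gk] Hx]].
case: (boolP (A' \in G)) => HA'; last first.
  have sGF : G \subset F.
    apply/subsetP => B BG; have := subsetP sG B BG; rewrite in_setU1.
    by case/orP => [/eqP eB|//]; move: BG; rewrite eB (negbTE HA').
  have [x Hc] := kwiseP _ _ kF G sGF (introT andP (conj G0 Gk)).
  by have [B BG /negP] := Hx x; apply; apply: Hc.
set G' := A |: (G :\ A').
have sG' : G' \subset F.
  apply/subsetP => B; rewrite in_setU1 => /orP [/eqP -> //|].
  rewrite in_setD1 => /andP [nB BG]; have := subsetP sG B BG.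
  by rewrite in_setU1 (negbTE nB).
have cG' : 0 < #|G'| <= k.
  have h1 := cardsU1 A (G :\ A'); have h2 := cardsD1 A' G.
  rewrite HA' in h2; apply/andP; split.
    by rewrite card_gt0; apply/set0Pn; exists A; rewrite setU11.
  rewrite /G' h1; move: h2 Gk; case: (A \notin G :\ A') => /= -> ; set u := #|_|; lia.
have [x Hc] := kwiseP _ _ kF G' sG' cG'.
have [B BG /negP] := Hx x; apply.
case: (eqVneq B A') => [eB|nB].
  by rewrite eB; apply: (subsetP sAA'); apply: Hc; rewrite setU11.
by apply: Hc; rewrite /G' in_setU1 in_setD1 nB BG orbT.
Qed.

Lemma cover n k (F : {set {set 'I_n}}) (X : {set 'I_n}) :
  maximal_kwise_intersecting k F -> X \notin F ->
  exists f : {ffun 'I_k.-1 -> {set 'I_n}},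
    f \in ffun_on (setT |: F) /\ X = ~: \bigcap_i f i.
Proof.
move=> mF nX; have /andP [kF mF'] := mF.
have := forallP mF' X; rewrite nX /= => /not_kwise [G [sG /andP [G0 Gk] Hx]].
have XG : X \in G.
  apply/negPn/negP => HX.
  have sGF : G \subset F.
    apply/subsetP => B BG; have := subsetP sG B BG; rewrite in_setU1.
    by case/orP => [/eqP eB|//]; move: BG; rewrite eB (negbTE HX).
  have [x Hc] := kwiseP _ _ kF G sGF (introT andP (conj G0 Gk)).
  by have [B BG /negP] := Hx x; apply; apply: Hc.
set S := G :\ X.
have SF : S \subset F.
  apply/subsetP => B; rewrite in_setD1 => /andP [nB BG]; have := subsetP sG B BG.
  by rewrite in_setU1 (negbTE nB).
have Sk : size (enum S) <= k.-1.
  have h2 := cardsD1 X G; rewrite XG /= in h2; rewrite -cardE.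
  move: h2 Gk; rewrite -/S; set u := #|S|; set v := #|G|; lia.
set s := enum S.
exists [ffun i : 'I_k.-1 => ~: X :|: nth setT s i]; split.
  apply/ffun_onP => i; rewrite ffunE.
  case: (ltnP i (size s)) => hi.
    have hS : nth setT s i \in S by rewrite -mem_enum mem_nth.
    rewrite in_setU1; apply/orP; right.
    by apply: (up_closed mF (subsetP SF _ hS)); apply: subsetUr.
  by rewrite nth_default // setUT setU11.
rewrite -[LHS]setCK; congr (~: _); apply/setP => x; rewrite in_setC.
case xX: (x \in X) => /=.
  apply/esym/negbTE/negP => /bigcapP Hc.
  have [B BG /negP] := Hx x; apply.
  case: (eqVneq B X) => [->//|nB].
  have BS : B \in s by rewrite mem_enum in_setD1 nB BG.
  have hi : index B s < k.-1 by apply: leq_trans Sk; rewrite index_mem.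
  have := Hc (Ordinal hi) isT; rewrite ffunE /= nth_index // in_setU in_setC xX /=.
  done.
by apply/esym/bigcapP => i _; rewrite ffunE in_setU in_setC xX.
Qed.

Lemma lower_count n k (F : {set {set 'I_n}}) :
  1 < k -> maximal_kwise_intersecting k F -> 2 ^ n <= #|F| + (#|F|.+1) ^ k.-1.
Proof.
move=> k1 mF.
have e1 : #|{set 'I_n}| = 2 ^ n by rewrite -cardsT -powersetT card_powerset cardsT card_ord.
rewrite -e1 -(cardsC F) leq_add2l.
pose Im := [set ~: (\bigcap_i f i) | f : {ffun 'I_k.-1 -> {set 'I_n}} in ffun_on (setT |: F)].
apply: (@leq_trans #|Im|).
  apply: subset_leq_card; apply/subsetP => X; rewrite in_setC => nX.
  have [f [fon ->]] := cover mF nX.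
  by apply/imsetP; exists f.
apply: leq_trans (leq_imset_card _ _) _.
rewrite card_ffun_on card_ord leq_exp2r; last by lia.
by rewrite cardsU1; case: (_ \notin _).
Qed.

Lemma card_setset n : #|{set 'I_n}| = 2 ^ n.
Proof. by rewrite -cardsT -powersetT card_powerset cardsT card_ord. Qed.

Lemma f_lower n k : 1 < k -> 2 ^ n <= f_mkwi n k + (f_mkwi n k).+1 ^ k.-1.
Proof.
move=> k1; rewrite /f_mkwi.
apply: (big_ind (fun m => 2 ^ n <= m + m.+1 ^ k.-1)).
- rewrite -cardsT -powersetT card_powerset cardsT card_setset.
  apply: leq_trans (leq_addr _ _); apply: leq_pexp2l => //; exact: ltnW (ltn_expl _ _).
- by move=> x y hx hy /=; rewrite /minn; case: ifP.
- by move=> F mF; apply: lower_count.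
Qed.


Definition inC n (e : bool) (x : 'I_n) : bool := e && (val x == n.-1).
Definition Pt n t e (i : nat) : {set 'I_n} := [set x : 'I_n | ~~ inC e x & x %% t == i].
Arguments Pt {n} t e i.
Definition inY n t e (Y : {set 'I_n}) : bool :=
  [forall x in Y, inC e x] || [exists i : 'I_t, Y \proper Pt t e i].
Definition Fam n t e : {set {set 'I_n}} := [set A | inY t e (~: A)].
Arguments Fam {n} t e.

Lemma inPt n t e i (x : 'I_n) : (x \in Pt t e i) = ~~ inC e x && (x %% t == i).
Proof. by rewrite inE. Qed.

Lemma meets_proper n t e (Y : {set 'I_n}) (i : 'I_t) x :
  inY t e Y -> x \in Y -> x \in Pt t e i -> Y \proper Pt t e i.
Proof.
case/orP => [/forallP H|/existsP [j Hj]] xY; rewrite inPt => /andP [nC /eqP xi].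
  by have := H x; rewrite xY /= (negbTE nC).
have := subsetP (proper_sub Hj) x xY; rewrite inPt => /andP [_ /eqP xj].
have -> : i = j by apply: val_inj; rewrite /= -xi -xj.
done.
Qed.

Lemma basept n t e (i : 'I_t) (hn : t.*2 < n) :
  exists x y : 'I_n, [/\ x != y, x \in Pt t e i & y \in Pt t e i].
Proof.
have ht : 0 < t by case: (i) => /= m; lia.
have h1 : i < n by move: (ltn_ord i); lia.
have h2 : i + t < n by move: (ltn_ord i); lia.
exists (Ordinal h1), (Ordinal h2); split.
- by apply/eqP => /(congr1 val) /=; lia.
- rewrite inPt /inC /= modn_small //; apply/andP; split => //.
  by apply/nandP; right; move: (ltn_ord i); lia.
- rewrite inPt /inC /= -modnDmr modnn addn0 modn_small //; apply/andP; split => //.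
  by apply/nandP; right; move: (ltn_ord i); lia.
Qed.

Lemma card_ge2 (T : finType) (S : {set T}) a b :
  a != b -> a \in S -> b \in S -> 2 <= #|S|.
Proof.
move=> ab aS bS; have <- : #|[set a; b]| = 2 by rewrite cards2 ab.
by apply: subset_leq_card; apply/subsetP => x; rewrite !inE => /orP [] /eqP ->.
Qed.

Lemma card_ge3 (T : finType) (S : {set T}) a b c :
  a != b -> a != c -> b != c -> a \in S -> b \in S -> c \in S -> 3 <= #|S|.
Proof.
move=> ab ac bc aS bS cS.
have <- : #|a |: [set b; c]| = 3 by rewrite cardsU1 cards2 bc !inE negb_or ab ac.
by apply: subset_leq_card; apply/subsetP => x; rewrite !inE => /or3P [] /eqP ->.
Qed.

Lemma Fam_kwise n t (e : bool) : 0 < t -> t.*2 < n -> kwise_intersecting (t.*2 + e).-1 (@Fam n t e).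
Proof.
move=> ht hn; apply/kwiseP => G sG /andP [G0 Gk].
case: (pickP (fun x => [forall A in G, x \in A])) => [x hx|H].
  by exists x => A AG; move/forallP: hx => /(_ A); rewrite AG.
have Hx : forall x, exists2 A, A \in G & x \notin A.
  move=> x; have /negbT /forallPn [A] := H x; rewrite negb_imply => /andP [AG xA].
  by exists A.
have YG : forall A, A \in G -> inY t e (~: A).
  by move=> A AG; have := subsetP sG A AG; rewrite inE.
have Hp : forall i : 'I_t, exists p : {set 'I_n} * {set 'I_n},
    [/\ p.1 \in G, p.2 \in G, p.1 != p.2,
        exists2 x, x \in Pt t e i & x \notin p.1 &
        exists2 x, x \in Pt t e i & x \notin p.2].
  move=> i; have [a [b [_ aP _]]] := basept e i hn.
  have [A1 A1G aA1] := Hx a.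
  have /properP [_ [y yP yA1]] : ~: A1 \proper Pt t e i.
    by apply: (meets_proper (YG _ A1G)) aP; rewrite in_setC.
  rewrite in_setC negbK in yA1.
  have [A2 A2G yA2] := Hx y.
  exists (A1, A2); split => //=; last by exists y.
    by apply/eqP => e12; move: yA2; rewrite -e12 yA1.
  by exists a.
have [g Hg] := fin_all_exists Hp.
pose h (p : 'I_t * bool) := if p.2 then (g p.1).1 else (g p.1).2.
have hP : forall p : 'I_t * bool, exists2 x, x \in Pt t e p.1 & x \notin h p.
  by move=> [i b]; rewrite /h /=; case: b; case: (Hg i).
have hinj : injective h.
  move=> [i b] [j b'] hij.
  have [x xP xh] := hP (i, b); have [y yP yh] := hP (j, b').
  have Yh : inY t e (~: h (i, b)).
    by rewrite /h /=; case: (b); case: (Hg i) => ? ? *; apply: YG.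
  have xc : x \in ~: h (i, b) by rewrite in_setC.
  have /properP [/subsetP s1 _] := meets_proper Yh xc xP.
  rewrite hij in Yh.
  have yc : y \in ~: h (j, b') by rewrite in_setC.
  have /properP [/subsetP s2 _] := meets_proper Yh yc yP.
  have := s1 y; rewrite hij in_setC yh => /(_ isT); rewrite inPt => /andP [_ /eqP yi].
  move: yP; rewrite inPt => /andP [_ /eqP yj].
  have eij : i = j by apply: val_inj; rewrite /= -yi -yj.
  subst j; congr (_, _).
  move: hij; rewrite /h /=; clear -Hg; case: (Hg i) => _ _ /eqP n12 _ _.
  by case: b; case: b' => //= H; exfalso; apply: n12; first [exact: H | exact: esym H].
have hG : h @: setT \subset G.
  apply/subsetP => A /imsetP [[i b] _ ->]; rewrite /h /=.
  by case: (Hg i) => ? ? _ _ _; case: b.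
have c2 : #|h @: setT| = t.*2.
  by rewrite card_imset // cardsT card_prod card_ord card_bool muln2.
case E : e in Gk; last first.
  by move: (subset_leq_card hG); rewrite c2; move: Gk; rewrite /=; set u := #|G|; lia.
have hz : (n.-1 < n) by lia.
have [A AG zA] := Hx (Ordinal hz).
have Ah : A \notin h @: setT.
  apply/negP => /imsetP [[i b] _ eA].
  have [x xP xh] := hP (i, b).
  have := meets_proper (YG A AG) (i := i); rewrite eA => /(_ x).
  rewrite in_setC xh => /(_ isT xP) /properP [/subsetP s _].
  by have := s (Ordinal hz); rewrite -eA in_setC zA inPt /inC /= E eqxx => /(_ isT).
have sAG : A |: h @: setT \subset G by rewrite subUset sub1set AG hG.
move: (subset_leq_card sAG); rewrite cardsU1 Ah c2; move: Gk; rewrite /=; set u := #|G|; lia.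
Qed.

Lemma Pt_of n t e (x : 'I_n) (ht : 0 < t) :
  ~~ inC e x -> x \in Pt t e (Ordinal (ltn_pmod x ht)).
Proof. by move=> h; rewrite inPt h /=. Qed.

Lemma Fam_max n t (e : bool) : 0 < t -> t.*2 < n -> forall B : {set 'I_n},
  B \notin Fam t e -> ~~ kwise_intersecting (t.*2 + e).-1 (B |: Fam t e).
Proof.
move=> ht hn B nB; set W := ~: B.
have nYW : ~~ inY t e W by move: nB; rewrite inE.
have Ha : forall i : 'I_t, exists a : 'I_n,
    a \in Pt t e i /\ ([exists x in Pt t e i, x \in W] -> a \in W).
  move=> i; case: (boolP [exists x in Pt t e i, x \in W]) => [/existsP [x /andP [xP xW]]|_].
    by exists x.
  by have [a [_ [_ aP _]]] := basept e i hn; exists a.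
have [a Ha'] := fin_all_exists Ha.
pose C := [set x : 'I_n | inC e x].
pose R (o : option ('I_t * bool)) : {set 'I_n} :=
  match o with
  | None => C :\: W
  | Some (i, false) => (Pt t e i :\: W) :&: [set a i]
  | Some (i, true) => (Pt t e i :\: W) :\ a i
  end.
pose O := [set o | R o != set0].
pose G := B |: [set ~: R o | o in O].
have gen : forall x o, x \in R o -> exists2 A, A \in G & x \notin A.
  move=> x o xo; exists (~: R o); last by rewrite in_setC xo.
  rewrite /G in_setU1; apply/orP; right; apply/imsetP; exists o => //.
  by rewrite inE; apply/set0Pn; exists x.
apply: (kwise_of (G := G)).
- apply/subsetP => A; rewrite in_setU1 => /orP [/eqP ->|/imsetP [o _ ->]].
    by rewrite setU11.
  rewrite in_setU1 inE setCK; apply/orP; right.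
  case: o => [[i [|]]|] /=.
  + apply/orP; right; apply/existsP; exists i; apply/properP; split.
      by apply/subsetP => x; rewrite in_setD1 in_setD => /and3P [].
    by exists (a i); [case: (Ha' i) | rewrite in_setD1 eqxx].
  + apply/orP; right; apply/existsP; exists i; apply/properP; split.
      by apply/subsetP => x; rewrite in_setI in_setD => /andP [/andP []].
    have [x [y [xy xP yP]]] := basept e i hn.
    case: (eqVneq x (a i)) => [exa|nxa].
      by exists y => //; rewrite in_setI in_set1 -exa eq_sym (negbTE xy) andbF.
    by exists x => //; rewrite in_setI in_set1 (negbTE nxa) andbF.
  + apply/orP; left; apply/forallP => x; apply/implyP; rewrite in_setD /C inE.
    by case/andP => _; rewrite inE.
- apply/andP; split.
    by rewrite card_gt0; apply/set0Pn; exists B; rewrite setU11.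
  have hO : #|G| <= (#|O|).+1.
    rewrite /G cardsU1 -add1n; apply: leq_add; first by case: (_ \notin _).
    exact: leq_imset_card.
  have hc : #|O| + #|~: O| = (t.*2).+1.
    by rewrite cardsC card_option card_prod card_ord card_bool muln2.
  have inO : forall o, (o \in ~: O) = (R o == set0) by move=> o; rewrite in_setC inE negbK.
  have fN : ~~ e -> None \in ~: O.
    move=> ne; rewrite inO; apply/eqP/setP => x.
    by rewrite /= in_setD /C inE in_set0 /inC (negbTE ne) andbF.
  have fA : forall i : 'I_t, a i \in W -> Some (i, false) \in ~: O.
    move=> i aW; rewrite inO; apply/eqP/setP => x.
    rewrite /= in_setI in_setD in_set1 in_set0.
    by case: eqVneq => [->|]; [rewrite aW | rewrite andbF].
  have fP : forall (i : 'I_t) (b : bool), Pt t e i \subset W -> Some (i, b) \in ~: O.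
    move=> i b sPW; rewrite inO; apply/eqP/setP => x.
    have h : (x \notin W) && (x \in Pt t e i) = false.
      by apply/negP => /andP [/negP xW /(subsetP sPW)].
    by case: b; rewrite /= ?in_setI ?in_setD1 in_setD h ?andbF ?andFb in_set0.
  have key : (if e then 2 else 3) <= #|~: O|.
    case: (boolP [exists i : 'I_t, Pt t e i \subset W]) => [/existsP [i sPW] | nc1].
      have h1 := fP i false sPW; have h2 := fP i true sPW.
      have d12 : Some (i, false) != Some (i, true) by apply/eqP => -[=].
      case E : e; first exact: card_ge2 d12 h1 h2.
      have h3 : None \in ~: O by apply: fN; rewrite E.
      exact: card_ge3 d12 _ _ h1 h2 h3.
    case: (boolP [exists i : 'I_t, [exists j : 'I_t, (i != j) &&
        [exists x in Pt t e i, x \in W] && [exists x in Pt t e j, x \in W]]]) =>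
        [/existsP [i /existsP [j /andP [/andP [ij mi] mj]]] | nc2].
      have ai := fA i ((Ha' i).2 mi); have aj := fA j ((Ha' j).2 mj).
      have nij : Some (i, false) != Some (j, false).
        by apply/eqP => [[eij]]; rewrite eij eqxx in ij.
      case E : e; first exact: card_ge2 nij ai aj.
      have h3 : None \in ~: O by apply: fN; rewrite E.
      exact: card_ge3 nij _ _ ai aj h3.
    move: nYW; rewrite /inY negb_or => /andP [/forallPn [x]].
    rewrite negb_imply => /andP [xW nC] nprop.
    pose i := Ordinal (ltn_pmod x ht).
    have xP : x \in Pt t e i := Pt_of ht nC.
    have mi : [exists y in Pt t e i, y \in W] by apply/existsP; exists x; rewrite xP xW.
    have aW := (Ha' i).2 mi.
    have nsub : ~~ (Pt t e i \subset W) by apply: contra nc1 => h; apply/existsP; exists i.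
    have nWP : ~~ (W \subset Pt t e i).
      apply: contra nprop => h; apply/existsP; exists i; by rewrite properE h nsub.
    have /subsetPn [y yW yP] := nWP.
    have cy : inC e y.
      apply/negPn/negP => ncy; apply: (negP nc2); apply/existsP; exists i.
      apply/existsP; exists (Ordinal (ltn_pmod y ht)); rewrite mi /= andbT.
      apply/andP; split.
        apply/eqP => eij; apply: (negP yP); rewrite eij; exact: Pt_of.
      by apply/existsP; exists y; rewrite Pt_of.
    move: (cy); rewrite /inC => /andP [E yv]; rewrite E.
    have hN : None \in ~: O.
      rewrite inO; apply/eqP/setP => z; rewrite /= in_setD /C inE in_set0.
      apply/negP => /andP [zW /andP [_ zv]].
      have zy : z = y by apply: val_inj; rewrite /= (eqP zv) (eqP yv).
      by rewrite zy yW in zW.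
    by apply: (card_ge2 (a := None) (b := Some (i, false))); rewrite ?fA.
  move: hO hc key; case: (e) => /=; set u := #|G|; set v := #|O|; set w := #|~: O|; lia.
- move=> x; case xW: (x \in W).
    by exists B; [rewrite setU11 | move: xW; rewrite in_setC].
  case cx: (inC e x).
    by apply: (gen x None); rewrite /= in_setD xW inE cx.
  have xP := Pt_of ht (negbT cx).
  case: (eqVneq x (a (Ordinal (ltn_pmod x ht)))) => [xa|nxa].
    by apply: (gen x (Some (Ordinal (ltn_pmod x ht), false))); rewrite /= in_setI in_setD xW xP /= in_set1; exact/eqP.
  by apply: (gen x (Some (Ordinal (ltn_pmod x ht), true))); rewrite /= in_setD1 nxa in_setD xW xP.
Qed.

Lemma card_bigcup_le (I T : finType) (A : I -> {set T}) :
  #|\bigcup_(i : I) A i| <= \sum_(i : I) #|A i|.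
Proof.
apply: (big_ind2 (fun (U : {set T}) (s : nat) => #|U| <= s)).
- by rewrite cards0.
- move=> x1 x2 y1 y2 h1 h2; apply: leq_trans (leq_add h1 h2).
  exact: (leq_card_setU x1 y1).1.
- by [].
Qed.

Lemma card_Pt n t e (i : nat) : 0 < t -> #|@Pt n t e i| <= (n %/ t).+1.
Proof.
move=> ht.
have hlt : forall x : 'I_n, x %/ t < (n %/ t).+1.
  by move=> x; rewrite ltnS leq_div2r // ltnW.
pose g (x : 'I_n) : 'I_(n %/ t).+1 := Ordinal (hlt x).
rewrite -(card_in_imset (f := g)); first by rewrite -[X in _ <= X]card_ord max_card.
move=> x y; rewrite !inPt => /andP [_ /eqP xi] /andP [_ /eqP yi] /(congr1 val) /= hg.
by apply: val_inj; rewrite /= (divn_eq x t) (divn_eq y t) hg xi yi.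
Qed.

Lemma card_C n (e : bool) : #|[set x : 'I_n | inC e x]| <= 1.
Proof.
apply/card_le1P => x; rewrite inE /inC => /andP [ee /eqP xv] y; rewrite inE /inC.
apply/idP/eqP => [/andP [_ /eqP yv]|->]; first by apply: val_inj; rewrite /= xv yv.
by rewrite ee xv eqxx.
Qed.

Lemma card_Fam n t (e : bool) : 0 < t -> #|@Fam n t e| <= t.+1 * 2 ^ (n %/ t).+1.
Proof.
move=> ht.
pose Ys := [set Y : {set 'I_n} | inY t e Y].
have -> : Fam t e = (@setC _) @^-1: Ys by apply/setP => A; rewrite !inE.
rewrite card_preimset; last exact: setC_inj.
pose C := [set x : 'I_n | inC e x].
apply: (@leq_trans #|powerset C :|: \bigcup_(i : 'I_t) powerset (Pt t e i)|).
  apply: subset_leq_card; apply/subsetP => Y; rewrite inE => /orP [/forallP H|/existsP [i Hi]].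
    rewrite in_setU powersetE; apply/orP; left; apply/subsetP => x xY.
    by have := H x; rewrite xY inE.
  rewrite in_setU; apply/orP; right; apply/bigcupP; exists i => //.
  by rewrite powersetE; apply: proper_sub.
apply: leq_trans (leq_card_setU _ _).1 _.
rewrite mulSn; apply: leq_add.
  rewrite card_powerset; apply: leq_trans (leq_pexp2l _ (card_C n e)) _ => //.
  by rewrite expn1 -{1}(expn1 2) leq_exp2l.
apply: leq_trans (card_bigcup_le _) _.
rewrite -[X in _ <= X * _]card_ord -sum_nat_const; apply: leq_sum => i _.
by rewrite card_powerset leq_exp2l // card_Pt.
Qed.

Lemma bigmin_leq (I : finType) (P : pred I) (F : I -> nat) d j :
  P j -> \big[minn/d]_(i | P i) F i <= F j.
Proof.
move=> Pj; have : j \in index_enum I by rewrite mem_index_enum.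
elim: (index_enum I) => [|x r IH] //; rewrite big_cons in_cons.
case/orP => [/eqP <-|jr]; first by rewrite Pj geq_minl.
case: (P x); last exact: IH.
by apply: leq_trans (geq_minr _ _) (IH jr).
Qed.

Lemma star_max n k (a : 'I_n) : 1 < k ->
  maximal_kwise_intersecting k [set A : {set 'I_n} | a \in A].
Proof.
move=> hk; apply/andP; split.
  apply/kwiseP => G sG _; exists a => A AG; by have := subsetP sG A AG; rewrite inE.
apply/forallP => B; apply/implyP; rewrite inE => naB.
apply: (kwise_of (G := [set B; [set a]])).
- apply/subsetP => A; rewrite !inE => /orP [/eqP ->|/eqP ->]; first by rewrite eqxx.
  by rewrite !inE eqxx orbT.
- by rewrite cards2; case: (_ != _) => /=; lia.
- move=> x; case: (eqVneq x a) => [->|xa].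
    by exists B => //; rewrite !inE eqxx.
  by exists [set a]; rewrite ?inE ?eqxx ?orbT //.
Qed.

Lemma k_eq k : k = ((uphalf k).*2 + ~~ odd k).-1.
Proof.
rewrite uphalf_half; have := odd_double_half k.
case: (odd k) => /= h; rewrite -{1}h -!muln2; lia.
Qed.

Lemma f_upper n k : 4 <= k -> 1 <= n ->
  f_mkwi n k <= 2 ^ (uphalf k).*2.+1 * (uphalf k).+1 * 2 ^ (n %/ uphalf k).
Proof.
move=> hk hn; set t := uphalf k.
have ht : 1 < t by rewrite /t uphalf_half; have := odd_double_half k; case: (odd k) => /= h; lia.
case: (leqP n t.*2) => hnt.
  have ha : 0 < n by [].
  have := @bigmin_leq _ (fun F => maximal_kwise_intersecting k F) (fun F => #|F|)
     #|{set {set 'I_n}}| _ (star_max (Ordinal ha) (ltnW (ltnW hk))).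
  rewrite -/(f_mkwi n k) => h1; apply: leq_trans h1 _.
  apply: leq_trans (max_card _) _; rewrite card_setset.
  apply: leq_trans (leq_pexp2l (isT : 0 < 2) hnt) _.
  have h2 : 2 ^ t.*2 <= 2 ^ t.*2 * (2 * t.+1 * 2 ^ (n %/ t)).
    by apply: leq_pmulr; rewrite !muln_gt0 expn_gt0.
  move: h2; rewrite expnS; set X := 2 ^ t.*2; set Y := 2 ^ (n %/ t); nia.
have hmax : maximal_kwise_intersecting k (@Fam n t (~~ odd k)).
  rewrite {1}(k_eq k) -/t; apply/andP; split.
    by apply: Fam_kwise => //; lia.
  apply/forallP => B; apply/implyP => nB; apply: Fam_max => //; lia.
have := @bigmin_leq _ (fun F => maximal_kwise_intersecting k F) (fun F => #|F|)
     #|{set {set 'I_n}}| _ hmax.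
rewrite -/(f_mkwi n k) => h1; apply: leq_trans h1 _.
apply: leq_trans (card_Fam _ _ _) _; first by lia.
rewrite expnS mulnA [t.+1 * 2]mulnC leq_mul2r; apply/orP; right.
rewrite leq_mul2r; apply/orP; right.
by rewrite -{1}(expn1 2) leq_exp2l.
Qed.


Lemma INR_expn a b : INR (expn a b) = pow (INR a) b.
Proof. elim: b => [|b IH] //=; by rewrite expnS mulnE mult_INR IH. Qed.

Lemma lower_nat n k m : 1 < k -> 1 <= n -> 2 ^ n <= m + m.+1 ^ k.-1 ->
  0 < m /\ 2 ^ n <= (4 * m) ^ k.-1.
Proof.
move=> hk hn h.
have m0 : 0 < m.
  case: m h => // h; rewrite add0n exp1n in h.
  by move: h; rewrite -[X in _ <= X](expn0 2) leq_exp2l //; lia.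
split => //.
apply: leq_trans h _.
have h1 : m.+1 ^ k.-1 <= (2 * m) ^ k.-1 by rewrite leq_exp2r; lia.
have h2 : m <= (2 * m) ^ k.-1.
  apply: leq_trans (_ : 2 * m <= _); first by lia.
  by rewrite -{1}(expn1 (2 * m)) leq_pexp2l //; lia.
have h3 : 2 <= 2 ^ k.-1 by rewrite -{1}(expn1 2) leq_exp2l //; lia.
rewrite (_ : 4 * m = 2 * (2 * m)); last by lia.
rewrite expnMn.
move: h1 h2 h3; set X := (2 * m) ^ k.-1; set Y := 2 ^ k.-1; set Z := m.+1 ^ k.-1; nia.
Qed.

Lemma real_lower n j m : (0 < j)%N -> (0 < m)%N -> (2 ^ n <= m ^ j)%N ->
  (Rpower 2 (INR n / INR j) <= INR m)%R.
Proof.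
move=> hj hm h.
have jpos : (0 < INR j)%R by apply: lt_0_INR; apply/ltP.
have mpos : (0 < INR m)%R by apply: lt_0_INR; apply/ltP.
have e1 : Rpower 2 (INR n / INR j) = Rpower (Rpower 2 (INR n)) (/ INR j).
  by rewrite Rpower_mult.
have e2 : INR m = Rpower (Rpower (INR m) (INR j)) (/ INR j).
  rewrite Rpower_mult Rinv_r; last by lra.
  by rewrite Rpower_1.
rewrite e1 e2; apply: Rle_Rpower_l.
  by left; apply: Rinv_0_lt_compat.
split; first by apply: exp_pos.
rewrite !Rpower_pow; [|lra|lra].
have := le_INR _ _ (elimT leP h); rewrite !INR_expn.
by rewrite (_ : INR 2 = 2%R) //; simpl; lra.
Qed.


Theorem proposition4p1 :
  forall k : nat, (4 <= k)%N ->
  exists c d : R, (0 < c)%R /\ (0 < d)%R /\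
    forall n : nat, (1 <= n)%N ->
      (c * Rpower 2 (INR n / INR (subn k 1)) <= INR (f_mkwi n k))%R /\
      (INR (f_mkwi n k) <= d * Rpower 2 (INR n / INR (uphalf k)))%R.
Proof.
move=> k hk; set t := uphalf k.
have ht : (1 < t)%N by rewrite /t uphalf_half; have := odd_double_half k; case: (odd k) => /= h; lia.
exists (/ 4)%R, (INR (2 ^ t.*2.+1 * t.+1)); split; first lra.
split.
  by apply: lt_0_INR; apply/ltP; rewrite muln_gt0 expn_gt0.
move=> n hn; split.
  have k1 : (1 < k)%N by lia.
  have [m0 hm] := lower_nat k1 hn (f_lower n k1).
  have := real_lower (j := k.-1) (m := 4 * f_mkwi n k) _ _ hm.
  rewrite subn1 mulnE mult_INR => h; have h4 : INR 4 = 4%R by simpl; lra.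
  rewrite h4 in h; apply: (_ : _ -> _) (h _ _); [lra | lia | lia].
have hu := f_upper hk hn; rewrite -/t in hu.
have := le_INR _ _ (elimT leP hu).
rewrite mulnE mult_INR INR_expn => h; apply: Rle_trans h _.
apply: Rmult_le_compat_l; first by apply: pos_INR.
have e2 : INR 2 = 2%R by simpl; lra.
rewrite e2 -Rpower_pow; last by lra.
apply: Rle_Rpower; first lra.
have tpos : (0 < INR t)%R by apply: lt_0_INR; apply/ltP; lia.
have hq : (INR (n %/ t) * INR t <= INR n)%R.
  rewrite -mult_INR; apply: le_INR; apply/leP; exact: leq_trunc_div.
apply: (Rmult_le_reg_r (INR t)) => //.
rewrite /Rdiv Rmult_assoc Rinv_l; lra.
Qed.
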